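(* A set $\mathbf D$ of tilings of $[n]$ is a Condorcet super-domain if and only if for every 4-element subset $F=\{i<j<k<l\}\subseteq[n]$, the restriction $\mathbf D|_F=\{T\cap\Lambda^3(F): T\in\mathbf D\}$ is a Condorcet super-domain for the color set $F$.
   Context: For a finite totally ordered set $C$ of colors, let $\Lambda^3(C)$ be the set of 3-element subsets of $C$, a triple $\{a<b<c\}$ being written $abc$. For a 4-element subset $\{a<b<c<d\}\subseteq C$, its stick is the sequence $(abc,\ abd,\ acd,\ bcd)$. A tiling for the color set $C$ (the inversion set of a rhombus tiling of the zonogon $Z(C;2)$) is a subset $T\subseteq\Lambda^3(C)$ such that for every 4-element subset $G\subseteq C$, $T\cap\mathrm{stick}(G)$ is an initial segment or a final segment of $\mathrm{stick}(G)$ (empty set and whole stick allowed). Here $n\ge 4$, $[n]=\{1,\dots,n\}$ with its usual order, and ''tiling'' without qualification means tiling for the color set $[n]$; note that $T\cap\Lambda^3(F)$ is a tiling for $F$ whenever $T$ is a tiling for $[n]$. For a finite set $V$ of odd cardinality and a family $(T_v)_{v\in V}$ of tilings for $C$, $sm((T_v)_{v\in V})$ is the set of triples lying in $T_v$ for more than $|V|/2$ indices $v$. A set $\mathbf D$ of tilings for $C$ is a Condorcet super-domain for $C$ if for every finite $V$ of odd cardinality and every family $(T_v)_{v\in V}$ with all $T_v\in\mathbf D$, $sm((T_v)_{v\in V})$ is a tiling for $C$. *)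

(* Defs.v *)
From mathcomp Require Import all_boot.
Set Implicit Arguments. Unset Strict Implicit. Unset Printing Implicit Defensive.

(* Colors: the color set [n] = {1,...,n} is represented by 'I_n = {0,...,n-1}
   with its usual (order-isomorphic) order. *)

Section Tilings.
Variable n : nat.

Definition triple := {set 'I_n}.

Definition Lambda3 (C : {set 'I_n}) : {set triple} :=
  [set t : triple | (t \subset C) && (#|t| == 3)].

Definition sorted_elems (G : {set 'I_n}) : seq 'I_n :=
  sort (fun x y : 'I_n => (x <= y)%N) (enum G).

(* stick of G = {a<b<c<d} : (abc, abd, acd, bcd) = (G\d, G\c, G\b, G\a) *)
Definition stick (G : {set 'I_n}) : seq triple :=
  [seq G :\ x | x <- rev (sorted_elems G)].

Definition initial_or_final (s : seq triple) (A : {set triple}) : Prop :=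
  exists k : nat,
    A = [set x in take k s] \/ A = [set x in drop k s].

Definition tiling (C : {set 'I_n}) (T : {set triple}) : Prop :=
  T \subset Lambda3 C /\
  forall G : {set 'I_n}, G \subset C -> #|G| = 4 ->
    initial_or_final (stick G) (T :&: [set x in stick G]).

Definition sm (V : finType) (f : V -> {set triple}) : {set triple} :=
  [set t : triple | (#|V| < 2 * #|[set v | t \in f v]|)%N].

Definition condorcet_super_domain (C : {set 'I_n}) (D : {set {set triple}}) : Prop :=
  forall (V : finType) (f : V -> {set triple}),
    odd #|V| -> (forall v, f v \in D) -> tiling C (sm f).

Definition restrict (D : {set {set triple}}) (F : {set 'I_n}) : {set {set triple}} :=
  [set T :&: Lambda3 F | T in D].

End Tilings.

(* Main.v *)
Require Import Defs.
From mathcomp Require Import all_boot.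
Set Implicit Arguments. Unset Strict Implicit.

Lemma stick_L3 n (G : {set 'I_n}) : #|G| = 4 -> [set x in stick G] \subset Lambda3 G.
Proof.
move=> hG; apply/subsetP => x; rewrite inE => /mapP [y].
rewrite mem_rev mem_sort mem_enum => yG ->.
rewrite inE subsetDl /=.
have := cardsD1 y G; rewrite yG hG.
by case: #|G :\ y| => // [[|[|[|[|k]]]]].
Qed.

Lemma L3_mono n (F C : {set 'I_n}) : F \subset C -> Lambda3 F \subset Lambda3 C.
Proof.
move=> FC; apply/subsetP => t; rewrite !inE => /andP [tF ->].
by rewrite (subset_trans tF FC).
Qed.

Lemma smI n (V : finType) (f g : V -> {set {set 'I_n}}) L :
  (forall v, f v = g v :&: L) -> sm f = sm g :&: L.
Proof.
move=> e; apply/setP => t; rewrite !inE.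
case tL: (t \in L).
- rewrite andbT.
  have -> : [set v | t \in f v] = [set v | t \in g v].
    by apply/setP => v; rewrite !inE e inE tL andbT.
  by [].
- rewrite andbF.
  have -> : [set v | t \in f v] = set0 by apply/setP => v; rewrite !inE e inE tL andbF.
  by rewrite cards0.
Qed.

Lemma tiling_restrict n (C F : {set 'I_n}) T :
  tiling C T -> F \subset C -> tiling F (T :&: Lambda3 F).
Proof.
move=> [_ hT] FC; split; first exact: subsetIr.
move=> G GF hG.
rewrite -setIA (setIidPr (subset_trans (stick_L3 hG) (L3_mono GF))).
exact: (hT G (subset_trans GF FC) hG).
Qed.

Theorem proposition1 (n : nat) (hn : (4 <= n)%N) (D : {set {set {set 'I_n}}})
  (hD : forall T, T \in D -> tiling [set: 'I_n] T) :
  condorcet_super_domain [set: 'I_n] D <->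
  (forall F : {set 'I_n}, #|F| = 4 -> condorcet_super_domain F (restrict D F)).
Proof.
split.
- move=> hcsd F hF V f hV hf.
  pose T v := odflt set0 [pick T in D | f v == T :&: Lambda3 F].
  have hT v : T v \in D /\ f v = T v :&: Lambda3 F.
    rewrite /T; case: pickP => [T0 /andP [h1 /eqP h2] | h] //=.
    exfalso; have := hf v; rewrite /restrict => /imsetP [T0 h0 e].
    by move: (h T0); rewrite h0 e eqxx.
  rewrite (smI (g := T) (fun v => (hT v).2)).
  exact: tiling_restrict (hcsd V T hV (fun v => (hT v).1)) (subsetT F).
- move=> h V f hV hf; split.
  + apply/subsetP => t; rewrite inE => ht.
    have : [set v | t \in f v] != set0.
      by apply/eqP => e; rewrite e cards0 in ht.
    case/set0Pn => v; rewrite inE => tv.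
    by have [/subsetP sub _] := hD _ (hf v); apply: sub.
  + move=> G _ hG.
    have hr := h G hG V (fun v => f v :&: Lambda3 G) hV
                 (fun v => imset_f (fun T => T :&: Lambda3 G) (hf v)).
    rewrite (smI (g := f) (fun v => erefl)) in hr.
    case: hr => _ /(_ G (subxx G) hG).
    by rewrite -setIA (setIidPr (stick_L3 hG)).
Qed.
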